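(* Let $u_x$ be the value at a point $x$ of a curvature-type tensor on a Hermitian manifold $(M,g,J)$ with $u_x\ge0$, and suppose $u_x(\xi,\bar\xi,\eta,\bar\eta)=0$ for some $\xi,\eta\in T^{1,0}_xM$. Let $e_1,\dots,e_n$ be an orthonormal basis of $T^{1,0}_xM$. Then $$\sum_{i,j}\Big(u_x(\xi,\bar\xi,e_i,\bar e_j)u_x(e_j,\bar e_i,\eta,\bar\eta)-u_x(\xi,\bar e_i,\eta,\bar e_j)u_x(e_j,\bar\xi,e_i,\bar\eta)\Big)\ge0.$$
   Context: A Hermitian metric $g$ on a complex manifold $(M,J)$ is a $J$-invariant Riemannian metric extended complex-bilinearly to $T_{\mathbb C}M=T^{1,0}M\oplus T^{0,1}M$; orthonormality of $e_i$ is with respect to the Hermitian inner product $g(\cdot,\bar\cdot)$ on $T^{1,0}_xM$. A real tensor $u\in(T^*M)^{\otimes4}$ is of curvature type if $u(X,Y,Z,W)=-u(Y,X,Z,W)=-u(X,Y,W,Z)$ and $u(JX,JY,Z,W)=u(X,Y,JZ,JW)=u(X,Y,Z,W)$; it is extended complex-multilinearly. $u_x\ge0$ means $u_x(\xi,\bar\xi,\eta,\bar\eta)\ge0$ for all $\xi,\eta\in T^{1,0}_xM$. *)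

(* Defs.v *)
(* Pointwise (linear-algebraic) model of the statement:
   T^{1,0}_x M  is modelled by 'cV[C]_n, C a numClosedFieldType (e.g. algC),
   the Hermitian metric by a Hermitian positive-definite matrix H, and the
   complex-multilinear extension of a real curvature-type tensor u_x by its
   restriction  U a b c d := u_x(a, \bar b, c, \bar d)  (a,b,c,d in T^{1,0}). *)
From HB Require Import structures.
From mathcomp Require Import all_boot all_order all_algebra.
Set Implicit Arguments.
Unset Strict Implicit.
Unset Printing Implicit Defensive.
Import Order.TTheory GRing.Theory Num.Theory.
Local Open Scope ring_scope.

Definition hdot (C : numClosedFieldType) (n : nat) (H : 'M[C]_n)
    (a b : 'cV[C]_n) : C :=
  ((map_mx Num.conj b)^T *m H *m a) 0 0.

Definition hermitian_metric (C : numClosedFieldType) (n : nat) (H : 'M[C]_n)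
    : Prop :=
  (forall a b : 'cV[C]_n, hdot H a b = (hdot H b a)^*) /\
  (forall a : 'cV[C]_n, a != 0 -> 0 < hdot H a a).

Definition orthonormal_basis (C : numClosedFieldType) (n : nat)
    (H : 'M[C]_n) (e : 'I_n -> 'cV[C]_n) : Prop :=
  forall i j : 'I_n, hdot H (e i) (e j) = (i == j)%:R.

(* U a b c d stands for u_x(a, \bar b, c, \bar d).  A real tensor of
   curvature type (skew in each pair, J-invariant in each pair), extended
   complex-multilinearly, is exactly determined by such a U which is
   C-linear in a and c, conjugate-linear in b and d, and satisfies the
   reality condition  conj (u(a,\bar b,c,\bar d)) = u(b,\bar a,d,\bar c). *)
Definition curvature_type (C : numClosedFieldType) (n : nat)
    (U : 'cV[C]_n -> 'cV[C]_n -> 'cV[C]_n -> 'cV[C]_n -> C) : Prop :=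
  [/\ (forall (k : C) a a' b c d,
         U (k *: a + a') b c d = k * U a b c d + U a' b c d),
      (forall (k : C) a b b' c d,
         U a (k *: b + b') c d = k^* * U a b c d + U a b' c d),
      (forall (k : C) a b c c' d,
         U a b (k *: c + c') d = k * U a b c d + U a b c' d),
      (forall (k : C) a b c d d',
         U a b c (k *: d + d') = k^* * U a b c d + U a b c d') &
      (forall a b c d, (U a b c d)^* = U b a d c)].

Definition curv_nonneg (C : numClosedFieldType) (n : nat)
    (U : 'cV[C]_n -> 'cV[C]_n -> 'cV[C]_n -> 'cV[C]_n -> C) : Prop :=
  forall xi eta : 'cV[C]_n, 0 <= U xi xi eta eta.

(* Main.v *)
Require Import Defs.
From HB Require Import structures.
From mathcomp Require Import all_boot all_order all_algebra.
From mathcomp Require Import sesquilinear spectral.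
From mathcomp Require Import ring.
Import Order.TTheory GRing.Theory Num.Theory.
Set Implicit Arguments.
Unset Strict Implicit.
Local Open Scope ring_scope.

Section Tr.
Variable C : numClosedFieldType.

Definition ct m n (M : 'M[C]_(m, n)) := map_mx Num.conj (M^T).

Definition psd m (A : 'M[C]_m) :=
  forall v : 'rV[C]_m, 0 <= (v *m A *m ct v) 0 0.

Lemma quad_entry m (P N : 'M[C]_m) k :
  (P *m N *m ct P) k k = (row k P *m N *m ct (row k P)) 0 0.
Proof.
rewrite !mxE; apply: eq_bigr => j _; rewrite !mxE; congr (_ * _).
by apply: eq_bigr => l _; rewrite !mxE.
Qed.

Lemma psd_trace m (A N : 'M[C]_m) : ct A = A -> psd A -> psd N ->
  0 <= \tr (A *m N).
Proof.
move=> hA pA pN.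
have nA : A \is normalmx by apply/normalmxP; rewrite /ct in hA; rewrite hA.
have := spectral_unitarymx A; set P := spectralmx A => uP.
move/orthomx_spectralP: nA; set d := spectral_diag A => Aeq.
rewrite invmx_unitary // in Aeq.
have hD : diag_mx d = P *m A *m ct P.
  by rewrite Aeq /ct !mulmxA (unitarymxP uP) mul1mx mulmxtVK.
rewrite Aeq -!mulmxA mxtrace_mulC -!mulmxA.
rewrite /mxtrace; apply: sumr_ge0 => k _.
rewrite mul_diag_mx mxE !mulmxA -/(ct P) quad_entry.
apply: mulr_ge0; last exact: pN.
have := congr1 (fun M : 'M[C]_m => M k k) hD; rewrite /= quad_entry mxE eqxx mulr1n => ->.
exact: pA.
Qed.

Definition quad m (u : 'rV[C]_m) (Q : 'M[C]_m) (w : 'rV[C]_m) :=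
  (u *m Q *m ct w) 0 0.

Lemma quadE m u (Q : 'M[C]_m) w :
  quad u Q w = \sum_i \sum_j u 0 i * Q i j * (w 0 j)^*.
Proof.
rewrite /quad mxE exchange_big /=; apply: eq_bigr => j _.
rewrite /ct [(u *m Q) 0 j]mxE big_distrl /=; apply: eq_bigr => i _; by rewrite !mxE.
Qed.

Lemma quadT m u (Q : 'M[C]_m) w :
  quad u Q w = quad (map_mx Num.conj w) Q^T (map_mx Num.conj u).
Proof.
rewrite !quadE exchange_big /=; apply: eq_bigr => j _; apply: eq_bigr => i _.
rewrite !mxE !conjCK; ring.
Qed.

Lemma quad_block m (a c : 'rV[C]_m) (P Q R S : 'M[C]_m) :
  quad (row_mx a c) (block_mx P Q R S) (row_mx a c) =
  quad a P a + quad c R a + quad a Q c + quad c S c.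
Proof.
rewrite /quad /ct tr_row_mx map_col_mx mul_row_block mul_row_col !mulmxDl.
by rewrite !mxE addrA.
Qed.

Lemma quadNl m u (Q : 'M[C]_m) w : quad u (- Q) w = quad (- u) Q w.
Proof.
rewrite !quadE; apply: eq_bigr => i _; apply: eq_bigr => j _.
by rewrite !mxE; ring.
Qed.
Lemma quadNr m u (Q : 'M[C]_m) w : quad u (- Q) w = quad u Q (- w).
Proof.
rewrite !quadE; apply: eq_bigr => i _; apply: eq_bigr => j _.
by rewrite !mxE rmorphN /= mulrN mulNr mulrN.
Qed.
Lemma quadNN m u (Q : 'M[C]_m) w : quad (- u) Q (- w) = quad u Q w.
Proof. by rewrite -quadNr quadNl opprK. Qed.

Lemma trE m (P Q : 'M[C]_m) : \tr (P *m Q) = \sum_i \sum_j P i j * Q j i.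
Proof. by rewrite /mxtrace; apply: eq_bigr => i _; rewrite mxE. Qed.
End Tr.

Section U.
Variable C : numClosedFieldType.
Variable n : nat.
Variable U : 'cV[C]_n -> 'cV[C]_n -> 'cV[C]_n -> 'cV[C]_n -> C.
Hypothesis hU : curvature_type U.

Lemma zero_of_double (x : C) : x = x + x -> x = 0.
Proof. by rewrite -{1}[x]addr0 => /addrI. Qed.

Lemma UD1 a a' b c d : U (a + a') b c d = U a b c d + U a' b c d.
Proof. by case: hU => h _ _ _ _; have := h 1 a a' b c d; rewrite scale1r mul1r. Qed.
Lemma UD2 a b b' c d : U a (b + b') c d = U a b c d + U a b' c d.
Proof. by case: hU => _ h _ _ _; have := h 1 a b b' c d; rewrite scale1r conjC1 mul1r. Qed.
Lemma UD3 a b c c' d : U a b (c + c') d = U a b c d + U a b c' d.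
Proof. by case: hU => _ _ h _ _; have := h 1 a b c c' d; rewrite scale1r mul1r. Qed.
Lemma UD4 a b c d d' : U a b c (d + d') = U a b c d + U a b c d'.
Proof. by case: hU => _ _ _ h _; have := h 1 a b c d d'; rewrite scale1r conjC1 mul1r. Qed.

Lemma UZ1 k a b c d : U (k *: a) b c d = k * U a b c d.
Proof.
have U0 : U 0 b c d = 0 by apply: zero_of_double; rewrite -UD1 addr0.
by case: hU => h _ _ _ _; have := h k a 0 b c d; rewrite addr0 U0 addr0.
Qed.
Lemma UZ2 k a b c d : U a (k *: b) c d = k^* * U a b c d.
Proof.
have U0 : U a 0 c d = 0 by apply: zero_of_double; rewrite -UD2 addr0.
by case: hU => _ h _ _ _; have := h k a b 0 c d; rewrite addr0 U0 addr0.
Qed.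
Lemma UZ3 k a b c d : U a b (k *: c) d = k * U a b c d.
Proof.
have U0 : U a b 0 d = 0 by apply: zero_of_double; rewrite -UD3 addr0.
by case: hU => _ _ h _ _; have := h k a b c 0 d; rewrite addr0 U0 addr0.
Qed.
Lemma UZ4 k a b c d : U a b c (k *: d) = k^* * U a b c d.
Proof.
have U0 : U a b c 0 = 0 by apply: zero_of_double; rewrite -UD4 addr0.
by case: hU => _ _ _ h _; have := h k a b c d 0; rewrite addr0 U0 addr0.
Qed.
Lemma UC a b c d : (U a b c d)^* = U b a d c.
Proof. by case: hU. Qed.

Variables xi eta : 'cV[C]_n.
Hypothesis h0 : U xi xi eta eta = 0.

Definition K2 A B := U A A eta eta + U xi xi B B + U A xi eta B + U xi A B eta
  + U A xi B eta + U xi A eta B.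

Lemma expand_even (t : C) A B : t^* = t ->
  U (xi + t *: A) (xi + t *: A) (eta + t *: B) (eta + t *: B)
  + U (xi + (- t) *: A) (xi + (- t) *: A) (eta + (- t) *: B) (eta + (- t) *: B)
  = 2 * t ^+ 2 * K2 A B + 2 * t ^+ 4 * U A A B B.
Proof.
move=> ht.
have ht' : (- t)^* = - t by rewrite rmorphN /= ht.
rewrite !(UD1, UD2, UD3, UD4) !(UZ1, UZ2, UZ3, UZ4) ht' ?ht h0 /K2.
ring.
Qed.

Hypothesis hN : curv_nonneg U.

Lemma K2_ge0 A B : 0 <= K2 A B.
Proof.
set K := K2 A B; set c := U A A B B.
have c0 : 0 <= c := hN A B.
have key : forall s, 0 < s -> 0 <= K + s * c.
  move=> s s0; set t := sqrtC s.
  have t0 : 0 <= t by rewrite sqrtC_ge0 ltW.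
  have ht : t^* = t := geC0_conj t0.
  have := @expand_even t A B ht.
  have f1 := hN (xi + t *: A) (eta + t *: B).
  have f2 := hN (xi + (- t) *: A) (eta + (- t) *: B).
  have e4 : t ^+ 4 = s ^+ 2 by rewrite -[4%N]/(2 * 2)%N exprM sqrtCK.
  rewrite e4 sqrtCK => e.
  have : 0 <= (2 * s) * (K + s * c).
    have -> : 2 * s * (K + s * c) = 2 * s * K + 2 * s ^+ 2 * c by ring.
    by rewrite -e; exact: addr_ge0.
  by rewrite pmulr_rge0 // mulr_gt0 // ltr0n.
have Kr : K \is Num.real.
  have -> : K = (K + 1 * c) - c by rewrite mul1r addrK.
  by rewrite rpredB // ger0_real // key // ltr01.
rewrite real_leNgt ?rpred0 //; apply/negP => Kneg.
have cK : 0 < c - K by rewrite subr_gt0; apply: lt_le_trans Kneg c0.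
have nK : 0 < - K by rewrite oppr_gt0.
have := key (- K / (c - K)) (divr_gt0 nK cK).
have -> : K + - K / (c - K) * c = - ((- K) * (- K) / (c - K)).
  by field; rewrite gt_eqF.
by rewrite oppr_ge0 lt_geF // divr_gt0 // mulr_gt0.
Qed.

Definition Phi A B := U A A eta eta + U xi xi B B + U A xi B eta + U xi A eta B.

Lemma Phi_ge0 A B : 0 <= Phi A B.
Proof.
have e : K2 A B + K2 ('i *: A) ((- 'i) *: B) = 2 * Phi A B.
  rewrite /K2 /Phi !(UZ1, UZ2, UZ3, UZ4) rmorphN /= conjCi opprK.
  have i2 : 'i * 'i = -1 :> C by rewrite -expr2 sqrCi.
  move: i2; generalize ('i : C) => i i2.
  apply/eqP; rewrite -subr_eq0; apply/eqP.
  transitivity ((1 + i * i) * (- U A A eta eta - U xi xi B B + U A xi eta B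
     + U xi A B eta - U A xi B eta - U xi A eta B)); first by ring.
  by rewrite i2 addrN mul0r.
have := addr_ge0 (K2_ge0 A B) (K2_ge0 ('i *: A) ((- 'i) *: B)).
by rewrite e pmulr_rge0 // ltr0n.
Qed.

Lemma U01 b c d : U 0 b c d = 0.
Proof. by apply: zero_of_double; rewrite -UD1 addr0. Qed.
Lemma U02 a c d : U a 0 c d = 0.
Proof. by apply: zero_of_double; rewrite -UD2 addr0. Qed.
Lemma U03 a b d : U a b 0 d = 0.
Proof. by apply: zero_of_double; rewrite -UD3 addr0. Qed.
Lemma U04 a b c : U a b c 0 = 0.
Proof. by apply: zero_of_double; rewrite -UD4 addr0. Qed.

Variable e : 'I_n -> 'cV[C]_n.

Lemma U1s (f : 'I_n -> C) b c d :
  U (\sum_i f i *: e i) b c d = \sum_i f i * U (e i) b c d.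
Proof.
rewrite (big_morph (fun x => U x b c d) (fun x y => UD1 x y b c d) (U01 b c d)).
by apply: eq_bigr => i _; rewrite UZ1.
Qed.
Lemma U2s (f : 'I_n -> C) a c d :
  U a (\sum_i f i *: e i) c d = \sum_i (f i)^* * U a (e i) c d.
Proof.
rewrite (big_morph (fun x => U a x c d) (fun x y => UD2 a x y c d) (U02 a c d)).
by apply: eq_bigr => i _; rewrite UZ2.
Qed.
Lemma U3s (f : 'I_n -> C) a b d :
  U a b (\sum_i f i *: e i) d = \sum_i f i * U a b (e i) d.
Proof.
rewrite (big_morph (fun x => U a b x d) (fun x y => UD3 a b x y d) (U03 a b d)).
by apply: eq_bigr => i _; rewrite UZ3.
Qed.
Lemma U4s (f : 'I_n -> C) a b c :
  U a b c (\sum_i f i *: e i) = \sum_i (f i)^* * U a b c (e i).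
Proof.
rewrite (big_morph (fun x => U a b c x) (fun x y => UD4 a b c x y) (U04 a b c)).
by apply: eq_bigr => i _; rewrite UZ4.
Qed.

Definition Xm := \matrix_(i, j) U (e i) (e j) eta eta.
Definition Ym := \matrix_(i, j) U (e i) xi (e j) eta.
Definition Zm := \matrix_(i, j) U xi xi (e j) (e i).
Definition Mm : 'M_(n + n) := block_mx Xm Ym (ct Ym) Zm.
Definition Nm : 'M_(n + n) :=
  block_mx Zm^T (- Ym^T) (- map_mx Num.conj Ym) Xm^T.

Lemma Mpsd : psd Mm.
Proof.
move=> v; rewrite -(hsubmxK v); set a := lsubmx v; set c := rsubmx v.
change (0 <= quad (row_mx a c) Mm (row_mx a c)); rewrite quad_block.
have := Phi_ge0 (\sum_i a 0 i *: e i) (\sum_i (c 0 i)^* *: e i).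
have eX : U (\sum_i a 0 i *: e i) (\sum_i a 0 i *: e i) eta eta = quad a Xm a.
  rewrite U1s quadE; apply: eq_bigr => i _; rewrite U2s big_distrr /=.
  by apply: eq_bigr => j _; rewrite !mxE; ring.
have eZ : U xi xi (\sum_i (c 0 i)^* *: e i) (\sum_i (c 0 i)^* *: e i)
    = quad c Zm c.
  rewrite U3s quadE exchange_big; apply: eq_bigr => i _; rewrite U4s big_distrr /=.
  by apply: eq_bigr => j _; rewrite !mxE conjCK; ring.
have eY : U (\sum_i a 0 i *: e i) xi (\sum_i (c 0 i)^* *: e i) eta
    = quad a Ym c.
  rewrite U1s quadE; apply: eq_bigr => i _; rewrite U3s big_distrr /=.
  by apply: eq_bigr => j _; rewrite !mxE; ring.
have eY' : U xi (\sum_i a 0 i *: e i) eta (\sum_i (c 0 i)^* *: e i)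
    = quad c (ct Ym) a.
  rewrite U2s quadE exchange_big; apply: eq_bigr => i _; rewrite U4s big_distrr /=.
  by apply: eq_bigr => j _; rewrite /ct !mxE UC conjCK; ring.
rewrite /Phi eX eZ eY eY'.
suff -> : quad a Xm a + quad c (ct Ym) a + quad a Ym c + quad c Zm c
  = quad a Xm a + quad c Zm c + quad a Ym c + quad c (ct Ym) a by [].
ring.
Qed.

Lemma Npsd : psd Nm.
Proof.
move=> v; rewrite -(hsubmxK v); set x := lsubmx v; set y := rsubmx v.
change (0 <= quad (row_mx x y) Nm (row_mx x y)); rewrite quad_block.
have : 0 <= quad (row_mx (map_mx Num.conj y) (- map_mx Num.conj x)) Mm
   (row_mx (map_mx Num.conj y) (- map_mx Num.conj x)) := Mpsd _.
rewrite quad_block.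
rewrite [quad x Zm^T x]quadT trmxK -[quad (map_mx _ x) Zm _]quadNN.
rewrite [quad y Xm^T y]quadT trmxK.
rewrite [quad x (- Ym^T) y]quadT linearN /= trmxK.
rewrite [quad (map_mx _ y) (- Ym) _]quadNr.
rewrite [quad y (- _) x]quadT linearN /= quadNl map_trmx.
rewrite -[(Ym ^t*)%sesqui]/(ct Ym).
move=> H; apply: (le_trans H); rewrite le_eqVlt; apply/orP; left; apply/eqP.
ring.
Qed.

Lemma trMN : \tr (Mm *m Nm) = 2 * (
  \sum_i \sum_j U xi xi (e i) (e j) * U (e j) (e i) eta eta -
  \sum_i \sum_j U xi (e i) eta (e j) * U (e j) xi (e i) eta).
Proof.
rewrite /Mm /Nm mulmx_block mxtrace_block !mxtraceD !mulmxN !linearN /= !trE.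
have e1 : \sum_i \sum_j Xm i j * Zm^T j i =
   \sum_i \sum_j U xi xi (e i) (e j) * U (e j) (e i) eta eta.
  rewrite exchange_big; apply: eq_bigr => i _; apply: eq_bigr => j _.
  by rewrite !mxE mulrC.
have e2 : \sum_i \sum_j Zm i j * Xm^T j i =
   \sum_i \sum_j U xi xi (e i) (e j) * U (e j) (e i) eta eta.
  rewrite exchange_big; apply: eq_bigr => i _; apply: eq_bigr => j _.
  by rewrite !mxE.
have e3 : \sum_i \sum_j Ym i j * (map_mx Num.conj Ym) j i =
   \sum_i \sum_j U xi (e i) eta (e j) * U (e j) xi (e i) eta.
  rewrite exchange_big; apply: eq_bigr => i _; apply: eq_bigr => j _.
  by rewrite !mxE UC mulrC.
have e4 : \sum_i \sum_j ct Ym i j * Ym^T j i =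
   \sum_i \sum_j U xi (e i) eta (e j) * U (e j) xi (e i) eta.
  rewrite exchange_big; apply: eq_bigr => i _; apply: eq_bigr => j _.
  by rewrite /ct !mxE UC.
rewrite e1 e2 e3 e4; ring.
Qed.

Lemma final : 0 <= \sum_(i < n) \sum_(j < n)
         (U xi xi (e i) (e j) * U (e j) (e i) eta eta
          - U xi (e i) eta (e j) * U (e j) xi (e i) eta).
Proof.
have := psd_trace (A:=Mm) (N:=Nm).
have hM : ct Mm = Mm.
  rewrite /ct /Mm tr_block_mx map_block_mx /ct.
  by congr block_mx; apply/matrixP => i j; rewrite !mxE ?UC ?conjCK.
move=> /(_ hM Mpsd Npsd); rewrite trMN pmulr_rge0 ?ltr0n //.
rewrite -sumrB; under eq_bigr => i _ do rewrite -sumrB.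
by [].
Qed.
End U.

Unset Implicit Arguments.
Set Strict Implicit.

Theorem corollary4p4 (C : numClosedFieldType) (n : nat) (H : 'M[C]_n)
    (U : 'cV[C]_n -> 'cV[C]_n -> 'cV[C]_n -> 'cV[C]_n -> C)
    (xi eta : 'cV[C]_n) (e : 'I_n -> 'cV[C]_n) :
  hermitian_metric H ->
  curvature_type U ->
  curv_nonneg U ->
  U xi xi eta eta = 0 ->
  orthonormal_basis H e ->
  0 <= \sum_(i < n) \sum_(j < n)
         (U xi xi (e i) (e j) * U (e j) (e i) eta eta
          - U xi (e i) eta (e j) * U (e j) xi (e i) eta).
Proof.
move=> _ hU hN h0 _.
exact: final.
Qed.
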